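(* Let $D\subseteq(\omega+1)^\omega$ be a wide set. Then there are topological embeddings $\varphi:(\omega+1)^\omega\to D$ and $\psi:\omega^\omega\to P[D]$ such that $\psi\circ P=(P\restriction D)\circ\varphi$.
   Context: $(\omega+1)^\omega$ carries the product of the order topologies on $\omega+1$ (Cantor topology); $D$ carries the subspace topology; $\omega^\omega$ the usual Baire space topology and $P[D]\subseteq\omega^\omega$ the subspace topology. For $\tau\in(\omega+1)^{<\omega}$, $[\tau]=\{x:\tau\subseteq x\}$; for a tree $T\subseteq(\omega+1)^{<\omega}$, $\lim T=\{x:\forall n\ x\restriction n\in T\}$. $P:(\omega+1)^\omega\to\omega^\omega$ is given by $P(x)(n)=x(n)+1$ if $x(n)<\omega$, $P(x)(n)=0$ if $x(n)=\omega$. A tree $T$ is wide if every $\tau\in T$ has an extension $\tau'\in T$ such that $\lim T\cap[\tau']$ is nowhere dense (Cantor topology) in $\lim T\cap[\tau]$; a set is wide if it is $\lim T$ for a wide tree $T$. *)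

(* Defs.v *)
From Stdlib Require Import Arith List Lia.
Import ListNotations.

(* omega+1 is represented by [option nat]: [Some k] is k, [None] is omega. *)
Definition Om1 := option nat.
Definition Cantor := nat -> Om1.
Definition Baire := nat -> nat.

(* Basic neighbourhoods of a point a in omega+1 (order topology):
   {k} for a = k < omega, and (N-1, omega] = {omega} u {m | m >= N} for a = omega. *)
Definition nearOm1 (N : nat) (a b : Om1) : Prop :=
  match a with
  | Some k => b = Some k
  | None => b = None \/ exists m, N <= m /\ b = Some m
  end.

Definition nbC (x : Cantor) (nN : nat * nat) (y : Cantor) : Prop :=
  forall i, i < fst nN -> nearOm1 (snd nN) (x i) (y i).

Definition nbB (x : Baire) (n : nat) (y : Baire) : Prop :=
  forall i, i < n -> y i = x i.

Definition cont_on {X Y I J : Type} (nbX : X -> I -> X -> Prop)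
  (nbY : Y -> J -> Y -> Prop) (A : X -> Prop) (f : X -> Y) : Prop :=
  forall x, A x -> forall j, exists i, forall y, A y -> nbX x i y -> nbY (f x) j (f y).

Definition embedding {X Y I J : Type} (nbX : X -> I -> X -> Prop)
  (nbY : Y -> J -> Y -> Prop) (A : X -> Prop) (B : Y -> Prop) (f : X -> Y) : Prop :=
  (forall x, A x -> B (f x)) /\
  (forall x y, A x -> A y -> f x = f y -> x = y) /\
  cont_on nbX nbY A f /\
  (forall x, A x -> forall i, exists j, forall y, A y -> nbY (f x) j (f y) -> nbX x i y).

Definition P (x : Cantor) : Baire :=
  fun n => match x n with Some k => S k | None => 0 end.

Definition imageP (D : Cantor -> Prop) (z : Baire) : Prop :=
  exists x, D x /\ P x = z.

Definition restr (x : Cantor) (n : nat) : list Om1 := map x (seq 0 n).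

Definition cone (tau : list Om1) (x : Cantor) : Prop :=
  restr x (length tau) = tau.

Definition is_tree (T : list Om1 -> Prop) : Prop :=
  T [] /\
  (forall s t, T (s ++ t) -> T s) /\
  (forall s, T s -> exists a, T (s ++ [a])).

Definition lim (T : list Om1 -> Prop) (x : Cantor) : Prop :=
  forall n, T (restr x n).

Definition closure_in (B A : Cantor -> Prop) (x : Cantor) : Prop :=
  B x /\ forall i, exists y, B y /\ A y /\ nbC x i y.

Definition interior_in (B C : Cantor -> Prop) (x : Cantor) : Prop :=
  B x /\ exists i, forall y, B y -> nbC x i y -> C y.

Definition nowhere_dense_in (B A : Cantor -> Prop) : Prop :=
  forall x, ~ interior_in B (closure_in B A) x.

Definition wide_tree (T : list Om1 -> Prop) : Prop :=
  is_tree T /\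
  forall tau, T tau -> exists t, T (tau ++ t) /\
    nowhere_dense_in (fun x => lim T x /\ cone tau x)
                     (fun x => lim T x /\ cone (tau ++ t) x).

Definition wide (D : Cantor -> Prop) : Prop :=
  exists T, wide_tree T /\ forall x, D x <-> lim T x.

(* Main.v *)
Require Import Defs.
From Stdlib Require Import Arith List Lia Classical ClassicalEpsilon FunctionalExtensionality.
Import ListNotations.

Definition at_ (s : list Om1) (i : nat) : Om1 := nth i s None.
Definition pre (s u : list Om1) : Prop :=
  length s <= length u /\ forall i, i < length s -> at_ s i = at_ u i.
Definition diff (s u : list Om1) : Prop :=
  exists i, i < length s /\ i < length u /\ at_ s i <> at_ u i.

Lemma pre_refl s : pre s s.
Proof. split; auto. Qed.

Lemma pre_trans s u w : pre s u -> pre u w -> pre s w.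
Proof.
  intros [H1 H2] [H3 H4]; split; [lia|].
  intros i Hi; rewrite H2 by lia; apply H4; lia.
Qed.

Lemma pre_app s t : pre s (s ++ t).
Proof.
  split; [rewrite length_app; lia|].
  intros i Hi; unfold at_; rewrite app_nth1; auto.
Qed.

Lemma diff_pre s u s' u' : diff s u -> pre s s' -> pre u u' -> diff s' u'.
Proof.
  intros [i [H1 [H2 H3]]] [H4 H5] [H6 H7].
  exists i; repeat split; try lia.
  rewrite <- H5, <- H7 by lia; auto.
Qed.

Lemma length_restr x n : length (restr x n) = n.
Proof. unfold restr; rewrite length_map, length_seq; auto. Qed.

Lemma at_restr x n i : i < n -> at_ (restr x n) i = x i.
Proof.
  intros Hi; unfold at_, restr.
  rewrite nth_indep with (d' := x 0) by (rewrite length_map, length_seq; auto).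
  rewrite map_nth, seq_nth by auto. auto.
Qed.

Lemma restr_eq x s n : length s = n -> (forall i, i < n -> x i = at_ s i) -> restr x n = s.
Proof.
  intros Hl H. apply nth_ext with (d := None) (d' := None).
  - rewrite length_restr; auto.
  - intros i Hi; rewrite length_restr in Hi.
    change (at_ (restr x n) i = at_ s i). rewrite at_restr by auto. auto.
Qed.

Lemma cone_at s x : cone s x -> forall i, i < length s -> x i = at_ s i.
Proof. unfold cone; intros H i Hi; rewrite <- H, at_restr; auto. Qed.

Lemma nearOm1_refl N a : nearOm1 N a a.
Proof. destruct a; simpl; auto. Qed.

Lemma nbC_refl x i : nbC x i x.
Proof. intros k _; apply nearOm1_refl. Qed.

Lemma near_mono N M a b : N <= M -> nearOm1 M a b -> nearOm1 N a b.
Proof.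
  destruct a; simpl; auto. intros H [H1|[k [H2 H3]]]; [left; auto | right; exists k; split; [lia|auto]].
Qed.

Lemma near_trans N M a b c : N <= M -> nearOm1 N a b -> nearOm1 M b c -> nearOm1 N a c.
Proof.
  intros HNM; destruct a as [k|]; simpl.
  - intros ->; simpl; auto.
  - intros [->|[k [Hk ->]]]; simpl.
    + intros [->|[j [Hj ->]]]; [left; auto| right; exists j; split; [lia|auto]].
    + intros ->; right; exists k; auto.
Qed.

Section Main.
Variable T : list Om1 -> Prop.
Hypothesis HT : wide_tree T.

Lemma T_nil : T [].
Proof. destruct HT as [[H _] _]; auto. Qed.

Lemma T_app s t : T (s ++ t) -> T s.
Proof. destruct HT as [[_ [H _]] _]; apply H. Qed.

Lemma T_ext s : T s -> exists a, T (s ++ [a]).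
Proof. destruct HT as [[_ [_ H]] _]; apply H. Qed.

Lemma T_pre s u : T u -> pre s u -> T s.
Proof.
  intros Hu [Hl Hp].
  assert (Hs : s = firstn (length s) u).
  { apply nth_ext with (d := None) (d' := None).
    - rewrite length_firstn; lia.
    - intros i Hi. change (at_ s i = nth i (firstn (length s) u) None).
      rewrite nth_firstn. destruct (Nat.ltb_spec i (length s)); [|lia]. apply Hp; auto. }
  rewrite Hs. apply (T_app _ (skipn (length s) u)). rewrite firstn_skipn; auto.
Qed.

Definition ext (s : list Om1) : Om1 := epsilon (inhabits None) (fun a => T (s ++ [a])).

Lemma ext_spec s : T s -> T (s ++ [ext s]).
Proof. intros Hs. unfold ext. apply (epsilon_spec (inhabits None) (fun a => T (s ++ [a]))). apply T_ext; auto. Qed.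

Fixpoint pth (r : list Om1) (k : nat) : list Om1 :=
  match k with 0 => r | S k => pth r k ++ [ext (pth r k)] end.

Definition pt (r : list Om1) : Cantor := fun i => at_ (pth r (S i)) i.

Lemma pth_T r k : T r -> T (pth r k).
Proof. intros Hr; induction k; simpl; auto. apply ext_spec; auto. Qed.

Lemma pth_len r k : length (pth r k) = length r + k.
Proof. induction k; simpl; auto. rewrite length_app; simpl; lia. Qed.

Lemma pth_mono r k k' : k <= k' -> pre (pth r k) (pth r k').
Proof.
  induction 1; [apply pre_refl|]. eapply pre_trans; eauto. simpl; apply pre_app.
Qed.

Lemma pt_at r k i : i < length (pth r k) -> pt r i = at_ (pth r k) i.
Proof.
  intros Hi; unfold pt.
  destruct (Nat.le_ge_cases (S i) k) as [H|H].
  - apply (pth_mono r) in H. destruct H as [_ H]. apply H. rewrite pth_len; lia.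
  - apply (pth_mono r) in H. destruct H as [_ H]. symmetry; apply H; auto.
Qed.

Lemma pt_lim r : T r -> lim T (pt r).
Proof.
  intros Hr n. apply T_pre with (u := pth r n). apply pth_T; auto.
  split. rewrite length_restr, pth_len; lia.
  intros i Hi; rewrite length_restr in Hi. rewrite at_restr by auto.
  apply pt_at. rewrite pth_len; lia.
Qed.

Lemma pt_cone r : cone r (pt r).
Proof.
  unfold cone. apply restr_eq; auto. intros i Hi.
  rewrite (pt_at r 0); simpl; auto.
Qed.

Definition nd (nu t : list Om1) : Prop :=
  nowhere_dense_in (fun x => lim T x /\ cone nu x) (fun x => lim T x /\ cone (nu ++ t) x).

Lemma escape nu t rho N :
  nd nu t -> T rho -> pre (nu ++ t) rho ->
  exists e, T e /\ length e = length rho /\ pre nu e /\ ~ pre (nu ++ t) e /\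
    forall i, i < length rho -> nearOm1 N (at_ rho i) (at_ e i).
Proof.
  intros Hnd Hr Hp.
  set (z := pt rho).
  assert (Hz : lim T z) by (apply pt_lim; auto).
  assert (Hcz : cone rho z) by apply pt_cone.
  assert (Hpn : pre nu rho) by (eapply pre_trans; [apply pre_app|exact Hp]).
  assert (Hcnu : cone nu z).
  { unfold cone; apply restr_eq; auto. intros i Hi.
    rewrite (cone_at _ _ Hcz) by (destruct Hpn; lia). destruct Hpn as [_ H]; symmetry; apply H; auto. }
  assert (Hy : exists y, (lim T y /\ cone nu y) /\ nbC z (length rho, N) y /\
     ~ closure_in (fun x => lim T x /\ cone nu x) (fun x => lim T x /\ cone (nu ++ t) x) y).
  { apply NNPP; intro Hno. apply (Hnd z). split; [split; auto|].
    exists (length rho, N). intros y By Hn. apply NNPP. intro Hc. apply Hno. exists y; auto. }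
  destruct Hy as [y [[Hly Hcy] [Hnb Hncl]]].
  assert (Hnc : ~ cone (nu ++ t) y).
  { intro Hc. apply Hncl. split; [split; auto|]. intro i. exists y. repeat split; auto. apply nbC_refl. }
  exists (restr y (length rho)). repeat split.
  - apply Hly.
  - apply length_restr.
  - rewrite length_restr; destruct Hpn; lia.
  - intros i Hi. rewrite at_restr by (destruct Hpn; lia). symmetry; apply cone_at; auto.
  - intros [Hl Hq]. apply Hnc. unfold cone. apply restr_eq; auto.
    intros i Hi. rewrite length_restr in Hl. rewrite Hq by auto. rewrite at_restr by lia. auto.
  - intros i Hi. rewrite at_restr by auto. specialize (Hnb i Hi). simpl in Hnb.
    rewrite (cone_at _ _ Hcz i Hi) in Hnb. auto.
Qed.


Definition tsel (nu : list Om1) : list Om1 :=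
  epsilon (inhabits []) (fun t => T (nu ++ t) /\ nd nu t).
Definition Aof (nu : list Om1) := nu ++ tsel nu.
Definition alpha (nu : list Om1) := Aof nu ++ [ext (Aof nu)].

Lemma Aof_spec nu : T nu -> T (Aof nu) /\ nd nu (tsel nu).
Proof.
  intros Hnu. unfold Aof, tsel.
  apply (epsilon_spec (inhabits []) (fun t => T (nu ++ t) /\ nd nu t)).
  destruct HT as [_ H]. destruct (H nu Hnu) as [t [H1 H2]]. exists t; auto.
Qed.

Lemma alpha_T nu : T nu -> T (alpha nu).
Proof. intros H; apply ext_spec, Aof_spec; auto. Qed.

Lemma pre_Aof_alpha nu : pre (Aof nu) (alpha nu).
Proof. apply pre_app. Qed.
Lemma pre_nu_Aof nu : pre nu (Aof nu).
Proof. apply pre_app. Qed.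
Lemma len_Aof_alpha nu : length (Aof nu) < length (alpha nu).
Proof. unfold alpha; rewrite length_app; simpl; lia. Qed.
Lemma len_nu_Aof nu : length nu <= length (Aof nu).
Proof. unfold Aof; rewrite length_app; lia. Qed.

Definition escP (nu rho : list Om1) (N : nat) (e : list Om1) : Prop :=
  T e /\ length e = length rho /\ pre nu e /\ ~ pre (Aof nu) e /\
    forall i, i < length rho -> nearOm1 N (at_ rho i) (at_ e i).

Definition esc (nu rho : list Om1) (N : nat) : list Om1 :=
  epsilon (inhabits nu) (escP nu rho N).

Lemma esc_spec nu rho N : T nu -> T rho -> pre (Aof nu) rho -> escP nu rho N (esc nu rho N).
Proof.
  intros Hnu Hr Hp. unfold esc. apply epsilon_spec.
  destruct (Aof_spec nu Hnu) as [_ Hnd].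
  destruct (escape nu (tsel nu) rho N Hnd Hr Hp) as [e He]. exists e; exact He.
Qed.

Definition trunc (m : nat) (a : Om1) : Om1 :=
  match a with Some k => if k <? m then Some k else None | None => None end.
Definition shift (x : Cantor) : Cantor := fun i => x (S i).
Definition look (m : nat) (x : Cantor) : list Om1 := map (trunc m) (restr (shift x) m).
Definition seqof (v : list Om1) : Cantor := fun i => at_ v i.
Definition Fam := list Om1 -> nat -> list Om1 -> list Om1.

Definition child (F : Fam) (nu : list Om1) (x : Cantor) : list Om1 :=
  match x 0 with None => alpha nu | Some m => F nu m (look m x) end.
Fixpoint run (F : Fam) (k : nat) (nu : list Om1) (x : Cantor) : list Om1 :=
  match k with 0 => nu | S k => run F k (child F nu x) (shift x) end.

Fixpoint allv (opts : list Om1) (k : nat) : list (list Om1) :=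
  match k with
  | 0 => [[]]
  | S k => flat_map (fun a => map (cons a) (allv opts k)) opts
  end.
Definition V (m : nat) := allv (None :: map Some (seq 0 m)) m.
Definition maxfin (s : list Om1) : nat :=
  fold_right (fun a acc => match a with Some k => Nat.max k acc | None => acc end) 0 s.
Definition maxL (l : list nat) : nat := fold_right Nat.max 0 l.

Definition rhoF (F : Fam) nu m v := run F m (alpha nu) (seqof (map (trunc m) v)).
Definition Nf (F : Fam) nu m :=
  S (m + maxL (map (fun v => maxfin (rhoF F nu m v)) (V m))
       + maxL (flat_map (fun m' => map (fun v => maxfin (F nu m' v)) (V m')) (seq 0 m))).
Definition escN (F : Fam) nu m v := esc nu (rhoF F nu m v) (Nf F nu m).

Fixpoint Efam (k : nat) : Fam :=
  match k with
  | 0 => fun nu _ _ => nu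
  | S k => fun nu m v => if m <? k then Efam k nu m v else escN (Efam k) nu m v
  end.
Definition E : Fam := fun nu m v => Efam (S m) nu m v.

Lemma Efam_agree k : forall m nu v, m < k -> Efam k nu m v = E nu m v.
Proof.
  induction k; intros m nu v Hm; [lia|]. simpl.
  destruct (Nat.ltb_spec m k) as [H|H].
  - apply IHk; auto.
  - assert (m = k) by lia. subst. unfold E. simpl. rewrite Nat.ltb_irrefl. auto.
Qed.

Definition bnd (m : nat) (z : Cantor) : Prop :=
  forall i, match z i with Some k => k < m | None => True end.

Lemma run_ext F G m : (forall nu m' v, m' < m -> F nu m' v = G nu m' v) ->
  forall k nu z, bnd m z -> run F k nu z = run G k nu z.
Proof.
  intros Hag k. induction k; intros nu z Hb; simpl; auto.
  assert (Hc : child F nu z = child G nu z).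
  { unfold child. specialize (Hb 0). destruct (z 0); auto. }
  rewrite Hc. apply IHk. intro i; apply Hb.
Qed.

Lemma at_map_trunc m v i : at_ (map (trunc m) v) i = trunc m (at_ v i).
Proof. unfold at_. change None with (trunc m None) at 1. apply map_nth. Qed.

Lemma trunc_bnd m a : match trunc m a with Some k => k < m | None => True end.
Proof. destruct a; simpl; auto. destruct (Nat.ltb_spec n m); simpl; auto. Qed.

Lemma bnd_seqof m v : bnd m (seqof (map (trunc m) v)).
Proof. intro i; unfold seqof; rewrite at_map_trunc; apply trunc_bnd. Qed.

Lemma flat_map_ext_in' {A B : Type} (f g : A -> list B) l :
  (forall a, In a l -> f a = g a) -> flat_map f l = flat_map g l.
Proof.
  induction l; simpl; intros H; auto. rewrite H by auto. rewrite IHl; auto.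
Qed.

Lemma E_eq nu m v : E nu m v = escN E nu m v.
Proof.
  unfold E at 1. simpl. rewrite Nat.ltb_irrefl.
  assert (Hag : forall nu m' v, m' < m -> Efam m nu m' v = E nu m' v) by (intros; apply Efam_agree; auto).
  assert (Hr : forall v, rhoF (Efam m) nu m v = rhoF E nu m v).
  { intro w; unfold rhoF; apply (run_ext _ _ m); auto. apply bnd_seqof. }
  unfold escN. rewrite Hr. f_equal. unfold Nf. f_equal. f_equal. f_equal.
  - f_equal. apply map_ext. intro; rewrite Hr; auto.
  - f_equal. apply flat_map_ext_in'. intros m' Hm'. apply in_seq in Hm'.
    apply map_ext. intro w. rewrite Hag by lia. auto.
Qed.

Lemma allv_spec opts k v : length v = k -> (forall a, In a v -> In a opts) -> In v (allv opts k).
Proof.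
  revert v; induction k; intros v Hl Ha; destruct v; simpl in *; try lia; auto.
  apply in_flat_map. exists o. split; auto. apply in_map. apply IHk; auto.
Qed.

Lemma look_len m x : length (look m x) = m.
Proof. unfold look; rewrite length_map, length_restr; auto. Qed.

Lemma V_in m v : length v = m -> In (map (trunc m) v) (V m).
Proof.
  intros Hl. apply allv_spec. rewrite length_map; auto.
  intros a Ha. apply in_map_iff in Ha. destruct Ha as [b [<- _]].
  destruct b as [k|]; simpl; auto. destruct (Nat.ltb_spec k m); simpl; auto.
  right. apply in_map. apply in_seq. lia.
Qed.

Lemma trunc_idem m a : trunc m (trunc m a) = trunc m a.
Proof. destruct a; simpl; auto. destruct (Nat.ltb_spec n m); simpl; auto.
  destruct (Nat.ltb_spec n m); auto; lia. Qed.

Lemma map_trunc_idem m v : map (trunc m) (map (trunc m) v) = map (trunc m) v.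
Proof. rewrite map_map. apply map_ext. apply trunc_idem. Qed.

Lemma rhoF_trunc F nu m v : rhoF F nu m (map (trunc m) v) = rhoF F nu m v.
Proof. unfold rhoF. rewrite map_trunc_idem; auto. Qed.

Lemma E_trunc nu m v : E nu m (map (trunc m) v) = E nu m v.
Proof. rewrite !E_eq. unfold escN. rewrite rhoF_trunc; auto. Qed.

Lemma look_trunc m x : map (trunc m) (look m x) = look m x.
Proof. unfold look; apply map_trunc_idem. Qed.

Lemma maxfin_ge s i k : at_ s i = Some k -> k <= maxfin s.
Proof.
  revert i; induction s; intros i H; unfold at_ in H; destruct i; simpl in *; try discriminate.
  - subst; lia.
  - specialize (IHs i H). destruct a; lia.
Qed.

Lemma maxL_ge l n : In n l -> n <= maxL l.
Proof. induction l; simpl; intros H; [contradiction|]. destruct H; subst; [lia|]. specialize (IHl H); lia. Qed.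

Lemma Nf_rho nu m v : length v = m -> maxfin (rhoF E nu m v) < Nf E nu m.
Proof.
  intros Hl. rewrite <- rhoF_trunc. unfold Nf.
  assert (maxfin (rhoF E nu m (map (trunc m) v)) <= maxL (map (fun v => maxfin (rhoF E nu m v)) (V m))).
  { apply maxL_ge. apply in_map_iff. eexists; split; [reflexivity|]. apply V_in; auto. }
  lia.
Qed.

Lemma Nf_E nu m m' v : m' < m -> length v = m' -> maxfin (E nu m' v) < Nf E nu m.
Proof.
  intros Hm Hl. rewrite <- E_trunc. unfold Nf.
  assert (maxfin (E nu m' (map (trunc m') v)) <=
     maxL (flat_map (fun m' => map (fun v => maxfin (E nu m' v)) (V m')) (seq 0 m))).
  { apply maxL_ge. apply in_flat_map. exists m'. split; [apply in_seq; lia|].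
    apply in_map_iff. eexists; split; [reflexivity|]. apply V_in; auto. }
  lia.
Qed.

Lemma Nf_m nu m : m < Nf E nu m.
Proof. unfold Nf; lia. Qed.

Definition EP (nu : list Om1) (m : nat) (v : list Om1) : Prop :=
  let rho := rhoF E nu m v in let e := E nu m v in
  T rho /\ pre (alpha nu) rho /\ length (alpha nu) + m <= length rho /\
  escP nu rho (Nf E nu m) e.

Lemma run_props_upto m :
  (forall m', m' < m -> forall nu v, T nu -> EP nu m' v) ->
  forall k nu z, T nu -> bnd m z ->
  T (run E k nu z) /\ pre nu (run E k nu z) /\ length nu + k <= length (run E k nu z).
Proof.
  intros IH k. induction k; intros nu z Hnu Hb; simpl.
  - split; auto. split; [apply pre_refl| lia].
  - assert (Hc : T (child E nu z) /\ pre nu (child E nu z) /\ length nu < length (child E nu z)).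
    { unfold child. specialize (Hb 0). destruct (z 0) as [m'|].
      - destruct (IH m' Hb nu (look m' z) Hnu) as [H1 [H2 [H3 [H4 [H5 [H6 _]]]]]].
        split; [auto|split; [auto|]].
        rewrite H5. pose proof (len_Aof_alpha nu). pose proof (len_nu_Aof nu). lia.
      - split; [apply alpha_T; auto|split].
        apply pre_trans with (Aof nu); [apply pre_nu_Aof|apply pre_Aof_alpha].
        pose proof (len_Aof_alpha nu). pose proof (len_nu_Aof nu). lia. }
    destruct Hc as [Hc1 [Hc2 Hc3]].
    destruct (IHk (child E nu z) (shift z) Hc1 (fun i => Hb (S i))) as [H1 [H2 H3]].
    split; [auto|split; [eapply pre_trans; eauto|lia]].
Qed.

Lemma EP_all m : forall nu v, T nu -> EP nu m v.
Proof.
  induction m as [m IH] using lt_wf_ind. intros nu v Hnu.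
  destruct (run_props_upto m IH m (alpha nu) (seqof (map (trunc m) v)) (alpha_T nu Hnu) (bnd_seqof m v))
    as [H1 [H2 H3]].
  unfold EP. fold (rhoF E nu m v) in *. split; [auto|split; [auto|split; [lia|]]].
  rewrite E_eq; unfold escN; apply esc_spec; auto; eapply pre_trans; [apply pre_Aof_alpha| exact H2].
Qed.

Lemma alpha_props nu : T nu -> T (alpha nu) /\ pre nu (alpha nu) /\ length nu < length (alpha nu).
Proof.
  intros H. split; [apply alpha_T; auto|split].
  apply pre_trans with (Aof nu); [apply pre_nu_Aof|apply pre_Aof_alpha].
  pose proof (len_Aof_alpha nu). pose proof (len_nu_Aof nu). lia.
Qed.

Lemma E_props nu m v : T nu ->
  T (E nu m v) /\ pre nu (E nu m v) /\ length (alpha nu) + m <= length (E nu m v) /\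
  length (E nu m v) = length (rhoF E nu m v).
Proof.
  intros H. destruct (EP_all m nu v H) as [H1 [H2 [H3 [H4 [H5 [H6 _]]]]]].
  split; [auto|split; [auto|split; lia]].
Qed.

Lemma child_props nu x : T nu ->
  T (child E nu x) /\ pre nu (child E nu x) /\ length nu < length (child E nu x).
Proof.
  intros H. unfold child. destruct (x 0) as [m|]; [|apply alpha_props; auto].
  destruct (E_props nu m (look m x) H) as [H1 [H2 [H3 _]]].
  pose proof (alpha_props nu H). split; [auto|split; [auto|lia]].
Qed.

Lemma run_props k : forall nu z, T nu ->
  T (run E k nu z) /\ pre nu (run E k nu z) /\ length nu + k <= length (run E k nu z).
Proof.
  induction k; intros nu z Hnu; simpl.
  - split; auto. split; [apply pre_refl| lia].
  - destruct (child_props nu z Hnu) as [Hc1 [Hc2 Hc3]].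
    destruct (IHk (child E nu z) (shift z) Hc1) as [H1 [H2 H3]].
    split; [auto|split; [eapply pre_trans; eauto|lia]].
Qed.

Lemma run_mono k : forall nu x, T nu -> pre (run E k nu x) (run E (S k) nu x).
Proof.
  induction k; intros nu x Hnu.
  - simpl. apply child_props; auto.
  - change (pre (run E k (child E nu x) (shift x)) (run E (S k) (child E nu x) (shift x))).
    apply IHk. apply child_props; auto.
Qed.

Lemma run_mono2 nu x k k' : T nu -> k <= k' -> pre (run E k nu x) (run E k' nu x).
Proof.
  intros Hnu; induction 1; [apply pre_refl|]. eapply pre_trans; eauto. apply run_mono; auto.
Qed.

Definition phi (nu : list Om1) (x : Cantor) : Cantor := fun i => at_ (run E (S i) nu x) i.

Lemma phi_run nu x k i : T nu -> i < length (run E k nu x) -> phi nu x i = at_ (run E k nu x) i.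
Proof.
  intros Hnu Hi. unfold phi.
  destruct (Nat.le_ge_cases (S i) k) as [H|H].
  - destruct (run_mono2 nu x _ _ Hnu H) as [_ H2]. apply H2.
    destruct (run_props (S i) nu x Hnu) as [_ [_ H3]]. lia.
  - destruct (run_mono2 nu x _ _ Hnu H) as [_ H2]. symmetry; apply H2; auto.
Qed.

Lemma phi_child nu x i : T nu -> phi nu x i = phi (child E nu x) (shift x) i.
Proof.
  intros Hnu. destruct (child_props nu x Hnu) as [Hc1 [_ Hc3]].
  rewrite (phi_run (child E nu x) (shift x) i i Hc1).
  - unfold phi. reflexivity.
  - destruct (run_props i (child E nu x) (shift x) Hc1) as [_ [_ H]]. lia.
Qed.

Lemma phi_pre nu x k s i : T nu -> pre s (run E k nu x) -> i < length s -> phi nu x i = at_ s i.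
Proof.
  intros Hnu [H1 H2] Hi. rewrite H2 by auto. apply phi_run; auto. lia.
Qed.

Lemma phi_at_child nu x i : T nu -> i < length (child E nu x) -> phi nu x i = at_ (child E nu x) i.
Proof. intros Hnu Hi. apply (phi_pre nu x 1); auto. apply pre_refl. Qed.

Lemma dev nu m v : T nu -> exists d, d < length (Aof nu) /\ at_ (alpha nu) d = None /\
  at_ (rhoF E nu m v) d = None /\ exists g, at_ (E nu m v) d = Some g /\ Nf E nu m <= g.
Proof.
  intros Hnu. destruct (EP_all m nu v Hnu) as [H1 [H2 [H3 [H4 [H5 [H6 [H7 H8]]]]]]].
  pose proof (len_Aof_alpha nu).
  assert (Hd : exists d, d < length (Aof nu) /\ at_ (Aof nu) d <> at_ (E nu m v) d).
  { apply NNPP; intro Hno. apply H7. split; [lia|]. intros i Hi.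
    apply NNPP; intro Hne. apply Hno; eauto. }
  destruct Hd as [d [Hd1 Hd2]].
  destruct (pre_Aof_alpha nu) as [_ HA]. destruct H2 as [_ Hr].
  assert (Hrd : at_ (rhoF E nu m v) d = at_ (Aof nu) d) by (rewrite HA, Hr by lia; auto).
  specialize (H8 d ltac:(lia)). rewrite Hrd in H8.
  exists d. split; auto.
  destruct (at_ (Aof nu) d) eqn:Ha; simpl in H8.
  - congruence.
  - split; [rewrite <- HA; auto|split; auto].
    destruct H8 as [H8|[g [Hg H8]]]; [congruence|]. exists g; auto.
Qed.

Definition samedec (x y : Cantor) : Prop :=
  x 0 = y 0 /\ forall m, x 0 = Some m -> look m x = look m y.

Lemma child_same nu x y : samedec x y -> child E nu x = child E nu y.
Proof.
  intros [H1 H2]. unfold child. rewrite <- H1. destruct (x 0); auto. rewrite H2; auto.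
Qed.

Lemma diff_sym s u : diff s u -> diff u s.
Proof. intros [i [H1 [H2 H3]]]; exists i; auto. Qed.

Lemma near_sep N a b c d : nearOm1 N a c -> nearOm1 N b d -> a <> b ->
  (forall k, a = Some k -> k < N) -> (forall k, b = Some k -> k < N) -> c <> d.
Proof.
  intros H1 H2 Hab Ha Hb.
  destruct a as [k|]; destruct b as [j|]; simpl in *.
  - subst; congruence.
  - specialize (Ha k eq_refl). subst. destruct H2 as [->|[h [Hh ->]]]; [discriminate|].
    intro Heq; inversion Heq; lia.
  - specialize (Hb j eq_refl). subst. destruct H1 as [->|[h [Hh ->]]]; [discriminate|].
    intro Heq; inversion Heq; lia.
  - congruence.
Qed.

Lemma at_maxfin s i k : at_ s i = Some k -> k <= maxfin s.
Proof. apply maxfin_ge. Qed.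

Definition RhoInc (m : nat) : Prop := forall nu v w, T nu -> length v = m -> length w = m ->
  map (trunc m) v <> map (trunc m) w -> diff (rhoF E nu m v) (rhoF E nu m w).

Lemma EInc m : RhoInc m -> forall nu v w, T nu -> length v = m -> length w = m ->
  map (trunc m) v <> map (trunc m) w -> diff (E nu m v) (E nu m w).
Proof.
  intros HR nu v w Hnu Hv Hw Hne.
  destruct (HR nu v w Hnu Hv Hw Hne) as [e [He1 [He2 He3]]].
  destruct (EP_all m nu v Hnu) as [_ [_ [_ [_ [Hl1 [_ [_ Hn1]]]]]]].
  destruct (EP_all m nu w Hnu) as [_ [_ [_ [_ [Hl2 [_ [_ Hn2]]]]]]].
  exists e. split; [lia|split; [lia|]].
  apply (near_sep (Nf E nu m) (at_ (rhoF E nu m v) e) (at_ (rhoF E nu m w) e)); auto.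
  - intros k Hk. apply at_maxfin in Hk. pose proof (Nf_rho nu m v Hv). lia.
  - intros k Hk. apply at_maxfin in Hk. pose proof (Nf_rho nu m w Hw). lia.
Qed.

Lemma ChildInc_gen nu x y : T nu -> (forall m, x 0 = Some m -> RhoInc m) -> ~ samedec x y ->
  diff (child E nu x) (child E nu y).
Proof.
  intros Hnu HR Hns. unfold child.
  assert (Hdev : forall m v, diff (E nu m v) (alpha nu)).
  { intros m v. destruct (dev nu m v Hnu) as [d [Hd1 [Hd2 [_ [g [Hg _]]]]]].
    destruct (E_props nu m v Hnu) as [_ [_ [HL _]]]. pose proof (len_Aof_alpha nu).
    exists d. split; [lia|split; [lia|]]. congruence. }
  assert (Hlt : forall m m' v w, m < m' -> length v = m -> diff (E nu m v) (E nu m' w)).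
  { intros m m' v w Hm Hv. destruct (dev nu m' w Hnu) as [d [Hd1 [_ [_ [g [Hg Hg2]]]]]].
    destruct (E_props nu m v Hnu) as [_ [_ [HL _]]].
    destruct (E_props nu m' w Hnu) as [_ [_ [HL' _]]]. pose proof (len_Aof_alpha nu).
    pose proof (Nf_E nu m' m v Hm Hv).
    exists d. split; [lia|split; [lia|]]. rewrite Hg. intro Heq. apply at_maxfin in Heq. lia. }
  destruct (x 0) as [m|] eqn:Hx; destruct (y 0) as [m'|] eqn:Hy.
  - destruct (Nat.lt_trichotomy m m') as [H|[H|H]].
    + apply Hlt; auto. apply look_len.
    + subst m'. apply (EInc m (HR m eq_refl)); auto using look_len.
      rewrite !look_trunc. intro Heq. apply Hns. split; [congruence|].
      intros k Hk. rewrite Hx in Hk. inversion Hk; subst; auto.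
    + apply diff_sym, Hlt; auto. apply look_len.
  - apply Hdev.
  - apply diff_sym, Hdev.
  - exfalso. apply Hns. split; [congruence|]. intros k Hk; rewrite Hx in Hk; discriminate.
Qed.

Lemma RunInc_upto m : (forall m', m' < m -> RhoInc m') ->
  forall k nu z1 z2, T nu -> bnd m z1 -> (exists j, j < k /\ z1 j <> z2 j) ->
  diff (run E k nu z1) (run E k nu z2).
Proof.
  intros HR k. induction k; intros nu z1 z2 Hnu Hb [j [Hj Hne]]; [lia|].
  simpl. destruct (classic (samedec z1 z2)) as [Hs|Hs].
  - rewrite <- (child_same nu z1 z2 Hs).
    destruct (child_props nu z1 Hnu) as [Hc _].
    apply IHk; auto. intro i; apply (Hb (S i)).
    destruct j as [|j]; [destruct Hs; congruence|]. exists j; split; [lia|auto].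
  - apply diff_pre with (child E nu z1) (child E nu z2).
    + apply ChildInc_gen; auto. intros m' Hm'. apply HR. specialize (Hb 0). rewrite Hm' in Hb; auto.
    + apply run_props, child_props; auto.
    + apply run_props, child_props; auto.
Qed.

Lemma RhoInc_all m : RhoInc m.
Proof.
  induction m as [m IH] using lt_wf_ind.
  intros nu v w Hnu Hv Hw Hne. unfold rhoF.
  apply (RunInc_upto m IH); auto. apply alpha_T; auto. apply bnd_seqof.
  apply NNPP; intro Hno. apply Hne. apply nth_ext with (d := None) (d' := None).
  - rewrite !length_map; lia.
  - intros i Hi. rewrite length_map in Hi. apply NNPP; intro Hn. apply Hno. exists i.
    split; [lia|]. unfold seqof. exact Hn.
Qed.

Lemma ChildInc nu x y : T nu -> ~ samedec x y -> diff (child E nu x) (child E nu y).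
Proof. intros; apply ChildInc_gen; auto. intros; apply RhoInc_all. Qed.

Lemma look_ext m x y : (forall i, i < m -> trunc m (x (S i)) = trunc m (y (S i))) -> look m x = look m y.
Proof.
  intros H. unfold look, restr. rewrite !map_map. apply map_ext_in. intros a Ha.
  apply in_seq in Ha. apply H. lia.
Qed.

Lemma at_look m x i : i < m -> at_ (look m x) i = trunc m (x (S i)).
Proof. intros Hi. unfold look. rewrite at_map_trunc, at_restr; auto. Qed.

Lemma near_trunc_eq N m a b : nearOm1 N a b -> m < N -> trunc m a = trunc m b.
Proof.
  intros H Hm. destruct a as [k|]; simpl in H.
  - subst; auto.
  - destruct H as [->|[h [Hh ->]]]; simpl; auto. destruct (Nat.ltb_spec h m); auto; lia.
Qed.

Lemma BI n0 : forall nu x, T nu -> exists K, forall y,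
  (forall i, i < K -> phi nu y i = phi nu x i) -> forall i, i < n0 -> y i = x i.
Proof.
  induction n0; intros nu x Hnu.
  - exists 0. intros; lia.
  - destruct (child_props nu x Hnu) as [Hc _].
    destruct (IHn0 (child E nu x) (shift x) Hc) as [K1 HK1].
    exists (K1 + length (child E nu x)). intros y Hy i Hi.
    assert (Hs : samedec x y).
    { apply NNPP; intro Hns. destruct (ChildInc nu x y Hnu Hns) as [j [Hj1 [Hj2 Hj3]]]. apply Hj3.
      rewrite <- (phi_at_child nu x j), <- (phi_at_child nu y j) by auto. symmetry; apply Hy; lia. }
    assert (Hcy : child E nu y = child E nu x) by (symmetry; apply child_same; auto).
    destruct i as [|i]; [destruct Hs; auto|].
    apply (HK1 (shift y)); [|lia].
    intros j Hj. rewrite <- (phi_child nu x j Hnu).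
    rewrite <- Hcy at 1. rewrite <- (phi_child nu y j Hnu). apply Hy; lia.
Qed.

Lemma BC d : forall nu x K, T nu -> K <= length nu + d -> exists n, forall y,
  (forall i, i < n -> y i = x i) -> forall i, i < K -> phi nu y i = phi nu x i.
Proof.
  induction d; intros nu x K Hnu HK.
  - exists 0. intros y _ i Hi. rewrite !(phi_run _ _ 0) by (simpl; auto; lia). reflexivity.
  - destruct (child_props nu x Hnu) as [Hc1 [_ Hc3]].
    destruct (IHd (child E nu x) (shift x) K Hc1 ltac:(lia)) as [n1 Hn1].
    exists (S (n1 + match x 0 with Some m => m | None => 0 end)). intros y Hy i Hi.
    assert (Hs : samedec x y).
    { split. symmetry; apply Hy; lia. intros m Hm. apply look_ext. intros j Hj.
      rewrite Hm in Hy. rewrite Hy by lia. auto. }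
    assert (Hcy : child E nu y = child E nu x) by (symmetry; apply child_same; auto).
    rewrite !(phi_child _ _ i Hnu), Hcy. apply Hn1; auto.
    intros j Hj. apply Hy. lia.
Qed.

Lemma CC d : forall nu x K N, T nu -> K <= length nu + d -> exists n N', forall y,
  (forall i, i < n -> nearOm1 N' (x i) (y i)) -> forall i, i < K -> nearOm1 N (phi nu x i) (phi nu y i).
Proof.
  induction d; intros nu x K N Hnu HK.
  - exists 0, 0. intros y _ i Hi. rewrite !(phi_run _ _ 0) by (simpl; auto; lia). apply nearOm1_refl.
  - destruct (child_props nu x Hnu) as [Hc1 [_ Hc3]].
    destruct (IHd (child E nu x) (shift x) K N Hc1 ltac:(lia)) as [n1 [N1 Hn1]].
    destruct (x 0) as [f|] eqn:Hx.
    + exists (S (n1 + f)), (S (N1 + f)). intros y Hy i Hi.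
      assert (Hy0 : y 0 = Some f) by (specialize (Hy 0 ltac:(lia)); rewrite Hx in Hy; simpl in Hy; auto).
      assert (Hs : samedec x y).
      { split; [congruence|]. intros m Hm. rewrite Hx in Hm; inversion Hm; subst m.
        apply look_ext. intros j Hj. apply (near_trunc_eq (S (N1 + f))); [apply Hy; lia|lia]. }
      assert (Hcy : child E nu y = child E nu x) by (symmetry; apply child_same; auto).
      rewrite !(phi_child _ _ i Hnu), Hcy. apply Hn1; auto.
      intros j Hj. apply near_mono with (S (N1 + f)); [lia|]. apply (Hy (S j)). lia.
    + set (n := S (n1 + K)).
      set (B := maxfin (restr x n)).
      exists n, (S (N1 + N + n1 + K + B)). intros y Hy i Hi.
      assert (Hcx : child E nu x = alpha nu) by (unfold child; rewrite Hx; auto).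
      destruct (y 0) as [m|] eqn:Hy0.
      * assert (Hm : S (N1 + N + n1 + K + B) <= m).
        { specialize (Hy 0 ltac:(lia)). rewrite Hx, Hy0 in Hy. simpl in Hy.
          destruct Hy as [Hy|[h [Hh Hy]]]; [discriminate|]. inversion Hy; subst; lia. }
        assert (Hcy : child E nu y = E nu m (look m y)) by (unfold child; rewrite Hy0; auto).
        set (v := look m y). set (z := seqof (map (trunc m) v)).
        destruct (EP_all m nu v Hnu) as [Hr1 [Hr2 [Hr3 [He1 [He2 [_ [_ Hnear]]]]]]].
        assert (Hz : forall j, j < n1 -> nearOm1 N1 (shift x j) (z j)).
        { intros j Hj. unfold z, seqof, shift. rewrite at_map_trunc. unfold v.
          rewrite at_look by lia. rewrite trunc_idem. specialize (Hy (S j) ltac:(unfold n; lia)).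
          destruct (x (S j)) as [k|] eqn:Hxj; simpl in Hy |- *.
          - rewrite Hy. simpl. assert (k <= B).
            { unfold B. apply (at_maxfin _ (S j)). rewrite at_restr by (unfold n; lia). auto. }
            destruct (Nat.ltb_spec k m); [auto|lia].
          - destruct Hy as [->|[h [Hh ->]]]; simpl; auto.
            destruct (Nat.ltb_spec h m); simpl; auto. right; exists h; split; [lia|auto]. }
        specialize (Hn1 z Hz i Hi).
        rewrite Hcx in Hn1. rewrite (phi_child nu x i Hnu), Hcx.
        rewrite (phi_at_child nu y i Hnu) by (rewrite Hcy; fold v; pose proof (alpha_props nu Hnu); lia).
        rewrite Hcy. fold v.
        rewrite (phi_run (alpha nu) z m i) in Hn1 by (try (apply alpha_T; auto); change (i < length (rhoF E nu m v)); lia).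
        apply near_trans with (Nf E nu m) (at_ (run E m (alpha nu) z) i).
        { pose proof (Nf_m nu m); lia. }
        { auto. }
        apply Hnear. fold (rhoF E nu m v). lia.
      * assert (Hs : samedec x y) by (split; [congruence|intros m Hm; rewrite Hx in Hm; discriminate]).
        assert (Hcy : child E nu y = child E nu x) by (symmetry; apply child_same; auto).
        rewrite !(phi_child _ _ i Hnu), Hcy. apply Hn1; auto.
        intros j Hj. apply near_mono with (S (N1 + N + n1 + K + B)); [lia|]. apply (Hy (S j)). unfold n; lia.
Qed.

Lemma far_sep M N a b c d : nearOm1 M a c -> nearOm1 M b d -> a <> b ->
  (forall k, a = Some k -> k < M) -> (forall k, b = Some k -> k < M) -> M <= N -> ~ nearOm1 N c d.
Proof.
  intros H1 H2 Hab Ha Hb HMN.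
  destruct a as [k|]; destruct b as [j|]; simpl in *.
  - subst. simpl. congruence.
  - specialize (Ha k eq_refl). subst. simpl.
    destruct H2 as [->|[h [Hh ->]]]; [discriminate|]. intro Heq; inversion Heq; lia.
  - specialize (Hb j eq_refl). subst.
    destruct H1 as [->|[h [Hh ->]]]; simpl.
    + intros [H|[h [Hh H]]]; [discriminate|inversion H; lia].
    + intro Heq; inversion Heq; lia.
  - congruence.
Qed.

Lemma ChildFar nu x y f N : T nu -> x 0 = Some f -> ~ samedec x y -> Nf E nu f <= N ->
  exists i, i < length (child E nu x) /\ i < length (child E nu y) /\
    ~ nearOm1 N (at_ (child E nu x) i) (at_ (child E nu y) i).
Proof.
  intros Hnu Hx Hns HN.
  assert (Hcx : child E nu x = E nu f (look f x)) by (unfold child; rewrite Hx; auto).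
  rewrite Hcx. set (v := look f x).
  destruct (dev nu f v Hnu) as [d [Hd1 [Hda [Hdr [g [Hg HgN]]]]]].
  destruct (E_props nu f v Hnu) as [_ [_ [HL _]]].
  pose proof (len_Aof_alpha nu).
  destruct (y 0) as [m|] eqn:Hy.
  - assert (Hcy : child E nu y = E nu m (look m y)) by (unfold child; rewrite Hy; auto).
    rewrite Hcy. set (w := look m y).
    destruct (E_props nu m w Hnu) as [_ [_ [HL' _]]].
    destruct (Nat.lt_trichotomy m f) as [Hmf|[Hmf|Hmf]].
    + exists d. split; [lia|split; [lia|]]. rewrite Hg. simpl. intro Heq.
      apply at_maxfin in Heq. pose proof (Nf_E nu f m w Hmf (look_len m y)). lia.
    + subst m. assert (Hvw : map (trunc f) v <> map (trunc f) w).
      { unfold v, w. rewrite !look_trunc. intro Heq. apply Hns. split; [congruence|].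
        intros k Hk; rewrite Hx in Hk; inversion Hk; subst; auto. }
      destruct (RhoInc_all f nu v w Hnu (look_len f x) (look_len f y) Hvw) as [e [He1 [He2 He3]]].
      destruct (EP_all f nu v Hnu) as [_ [_ [_ [_ [Hl1 [_ [_ Hn1]]]]]]].
      destruct (EP_all f nu w Hnu) as [_ [_ [_ [_ [Hl2 [_ [_ Hn2]]]]]]].
      exists e. split; [lia|split; [lia|]].
      apply (far_sep (Nf E nu f) N (at_ (rhoF E nu f v) e) (at_ (rhoF E nu f w) e)); auto.
      * intros k Hk. apply at_maxfin in Hk. pose proof (Nf_rho nu f v (look_len f x)). lia.
      * intros k Hk. apply at_maxfin in Hk. pose proof (Nf_rho nu f w (look_len f y)). lia.
    + exists d. split; [lia|split; [lia|]]. rewrite Hg. simpl.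
      destruct (EP_all m nu w Hnu) as [_ [[_ Hpr] [Hr3 [_ [_ [_ [_ Hn']]]]]]].
      assert (Hrd : at_ (rhoF E nu m w) d = None) by (rewrite <- Hpr by lia; auto).
      specialize (Hn' d ltac:(lia)). rewrite Hrd in Hn'. simpl in Hn'.
      assert (g <= maxfin (E nu f v)) by (apply (at_maxfin _ d); auto).
      pose proof (Nf_E nu m f v Hmf (look_len f x)).
      destruct Hn' as [HH|[h [Hh HH]]]; rewrite HH; [discriminate|]. intro Heq; inversion Heq; lia.
  - assert (Hcy : child E nu y = alpha nu) by (unfold child; rewrite Hy; auto).
    rewrite Hcy. exists d. split; [lia|split; [lia|]]. rewrite Hg, Hda. simpl. discriminate.
Qed.

Lemma near_back N M N1 a b c : nearOm1 N a c -> nearOm1 M b c ->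
  (forall k, a = Some k -> k < M) -> N1 <= N -> nearOm1 N1 a b.
Proof.
  intros H1 H2 Ha HN. destruct a as [k|]; simpl in *.
  - specialize (Ha k eq_refl). subst c. destruct b as [j|]; simpl in H2.
    + congruence.
    + destruct H2 as [H2|[h [Hh H2]]]; [discriminate|]. inversion H2; lia.
  - destruct b as [j|]; simpl in H2; [|left; auto]. subst c.
    destruct H1 as [H1|[h [Hh H1]]]; [discriminate|]. inversion H1; subst. right; exists h; split; [lia|auto].
Qed.

Lemma near_trunc2 N0 m a b : nearOm1 N0 a (trunc m b) -> N0 <= m -> nearOm1 N0 a b.
Proof.
  intros H Hm. destruct b as [j|]; simpl in H.
  - destruct (Nat.ltb_spec j m); auto.
    destruct a; simpl in *; [discriminate|]. right; exists j; split; [lia|auto].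
  - auto.
Qed.

Lemma CI n0 : forall nu x N0, T nu -> exists K N, forall y,
  (forall i, i < K -> nearOm1 N (phi nu x i) (phi nu y i)) -> forall i, i < n0 -> nearOm1 N0 (x i) (y i).
Proof.
  induction n0; intros nu x N0 Hnu.
  - exists 0, 0. intros; lia.
  - destruct (child_props nu x Hnu) as [Hc1 [_ Hc3]].
    destruct (x 0) as [f|] eqn:Hx.
    + destruct (IHn0 (child E nu x) (shift x) N0 Hc1) as [K1 [N1 HK1]].
      exists (K1 + length (child E nu x)), (N1 + Nf E nu f). intros y Hy i Hi.
      assert (Hs : samedec x y).
      { apply NNPP; intro Hns.
        destruct (ChildFar nu x y f (N1 + Nf E nu f) Hnu Hx Hns ltac:(lia)) as [j [Hj1 [Hj2 Hj3]]].
        apply Hj3. rewrite <- (phi_at_child nu x j), <- (phi_at_child nu y j) by auto. apply Hy; lia. }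
      assert (Hcy : child E nu y = child E nu x) by (symmetry; apply child_same; auto).
      destruct i as [|i]; [destruct Hs as [Hs _]; rewrite <- Hs; apply nearOm1_refl|].
      apply (HK1 (shift y)); [|lia].
      intros j Hj. rewrite <- (phi_child nu x j Hnu).
      rewrite <- Hcy at 1. rewrite <- (phi_child nu y j Hnu).
      apply near_mono with (N1 + Nf E nu f); [lia|]. apply Hy; lia.
    + assert (Hcx : child E nu x = alpha nu) by (unfold child; rewrite Hx; auto).
      destruct (IHn0 (alpha nu) (shift x) N0 (alpha_T nu Hnu)) as [K1 [N1 HK1]].
      set (M := S (N0 + n0 + K1 + maxfin (restr (phi nu x) K1))).
      exists (K1 + length (alpha nu)), (N1 + Nf E nu M). intros y Hy i Hi.
      destruct (y 0) as [m|] eqn:Hy0.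
      * assert (Hcy : child E nu y = E nu m (look m y)) by (unfold child; rewrite Hy0; auto).
        set (v := look m y).
        destruct (E_props nu m v Hnu) as [_ [_ [HL _]]].
        pose proof (len_Aof_alpha nu).
        destruct (Nat.lt_ge_cases m M) as [HmM|HmM].
        -- exfalso.
           destruct (dev nu m v Hnu) as [d [Hd1 [Hda [_ [g [Hg _]]]]]].
           specialize (Hy d ltac:(lia)).
           rewrite (phi_at_child nu x d Hnu) in Hy by (rewrite Hcx; lia).
           rewrite (phi_at_child nu y d Hnu) in Hy by (rewrite Hcy; fold v; lia).
           rewrite Hcx, Hcy in Hy. fold v in Hy. rewrite Hda, Hg in Hy. simpl in Hy.
           assert (g <= maxfin (E nu m v)) by (apply (at_maxfin _ d); auto).
           pose proof (Nf_E nu M m v HmM (look_len m y)).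
           destruct Hy as [Hy|[h [Hh Hy]]]; [discriminate|]. inversion Hy; lia.
        -- destruct i as [|i].
           { rewrite Hx, Hy0. simpl. right. exists m. split; [lia|auto]. }
           set (z := seqof (map (trunc m) v)).
           destruct (EP_all m nu v Hnu) as [Hr1 [Hr2 [Hr3 [He1 [He2 [_ [_ Hnear]]]]]]].
           assert (Hz : forall j, j < K1 -> nearOm1 N1 (phi (alpha nu) (shift x) j) (phi (alpha nu) z j)).
           { intros j Hj.
             rewrite (phi_run (alpha nu) z m j) by (try (apply alpha_T; auto); change (j < length (rhoF E nu m v)); lia).
             replace (phi (alpha nu) (shift x) j) with (phi nu x j) by (rewrite (phi_child nu x j Hnu), Hcx; auto).
             apply near_back with (N1 + Nf E nu M) (Nf E nu m) (at_ (E nu m v) j).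
             - replace (at_ (E nu m v) j) with (at_ (child E nu y) j) by (rewrite Hcy; auto).
               rewrite <- (phi_at_child nu y j Hnu) by (rewrite Hcy; fold v; lia). apply Hy; lia.
             - apply Hnear. lia.
             - intros k Hk. assert (k <= maxfin (restr (phi nu x) K1)).
               { apply (at_maxfin _ j). rewrite at_restr; auto. }
               pose proof (Nf_m nu m). lia.
             - lia. }
           specialize (HK1 z Hz i ltac:(lia)).
           unfold z, seqof, shift in HK1. rewrite at_map_trunc in HK1. unfold v in HK1.
           rewrite at_look in HK1 by lia. rewrite trunc_idem in HK1.
           apply near_trunc2 with m; auto. lia.
      * assert (Hs : samedec x y) by (split; [congruence|intros m Hm; rewrite Hx in Hm; discriminate]).
        assert (Hcy : child E nu y = child E nu x) by (symmetry; apply child_same; auto).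
        destruct i as [|i]; [rewrite Hx, Hy0; apply nearOm1_refl|].
        apply (HK1 (shift y)); [|lia].
        intros j Hj. rewrite <- Hcx. rewrite <- (phi_child nu x j Hnu).
        rewrite <- Hcy at 1. rewrite <- (phi_child nu y j Hnu).
        apply near_mono with (N1 + Nf E nu M); [lia|]. apply Hy; lia.
Qed.

Lemma phi_lim x : lim T (phi [] x).
Proof.
  intro n. destruct (run_props n [] x T_nil) as [H1 [_ H3]].
  apply T_pre with (run E n [] x); auto. split.
  - rewrite length_restr; simpl in H3; lia.
  - intros i Hi. rewrite length_restr in Hi. rewrite at_restr by auto.
    apply phi_run; [apply T_nil|]. simpl in H3; lia.
Qed.

Lemma phi_inj x y : phi [] x = phi [] y -> x = y.
Proof.
  intros H. apply functional_extensionality. intro i.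
  destruct (BI (S i) [] x T_nil) as [K HK]. symmetry. apply HK; [|lia].
  intros j _. rewrite H; auto.
Qed.

End Main.

Definition Pinv (z : Baire) : Cantor := fun n => match z n with 0 => None | S k => Some k end.

Lemma Pinv_P x : Pinv (P x) = x.
Proof. apply functional_extensionality; intro n. unfold Pinv, P. destruct (x n); auto. Qed.

Lemma P_at a b n : P a n = P b n -> a n = b n.
Proof. unfold P. destruct (a n), (b n); congruence. Qed.

Lemma Pinv_at z z' n : Pinv z n = Pinv z' n -> z n = z' n.
Proof. unfold Pinv. destruct (z n), (z' n); congruence. Qed.

Theorem mainTheorem3 (D : Cantor -> Prop) :
  wide D ->
  exists (phi : Cantor -> Cantor) (psi : Baire -> Baire),
    embedding nbC nbC (fun _ => True) D phi /\
    embedding nbB nbB (fun _ => True) (imageP D) psi /\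
    (forall x, psi (P x) = P (phi x)).
Proof.
  intros [T [HT HD]].
  exists (phi T [] ), (fun z => P (phi T [] (Pinv z))).
  split; [|split].
  - split; [|split; [|split]].
    + intros x _. apply HD. apply phi_lim; auto.
    + intros x y _ _ H. apply (phi_inj T HT); auto.
    + intros x _ [K N].
      destruct (CC T HT K [] x K N (T_nil T HT) ltac:(simpl; lia)) as [n [N' Hn]].
      exists (n, N'). intros y _ Hy i Hi. apply Hn; auto.
    + intros x _ [n0 N0].
      destruct (CI T HT n0 [] x N0 (T_nil T HT)) as [K [N HK]].
      exists (K, N). intros y _ Hy i Hi. apply HK; auto.
  - split; [|split; [|split]].
    + intros z _. exists (phi T [] (Pinv z)). split; auto. apply HD. apply phi_lim; auto.
    + intros z1 z2 _ _ H. apply functional_extensionality; intro n.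
      apply Pinv_at. assert (Hp : phi T [] (Pinv z1) = phi T [] (Pinv z2)).
      { apply functional_extensionality; intro i. apply P_at. rewrite H; auto. }
      apply (phi_inj T HT) in Hp. rewrite Hp; auto.
    + intros z _ K.
      destruct (BC T HT K [] (Pinv z) K (T_nil T HT) ltac:(simpl; lia)) as [n Hn].
      exists n. intros z' _ Hz' i Hi. unfold P. rewrite (Hn (Pinv z')); auto.
      intros j Hj. unfold Pinv. rewrite Hz'; auto.
    + intros z _ n0.
      destruct (BI T HT n0 [] (Pinv z) (T_nil T HT)) as [K HK].
      exists K. intros z' _ Hz' i Hi. apply Pinv_at. apply HK; auto.
      intros j Hj. apply P_at. apply Hz'; auto.
  - intros x. rewrite Pinv_P. reflexivity.
Qed.
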